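(* Let $H=\mathbb R^d$, $d\ge1$. Let $b:H\to H$ be continuously differentiable and assume there exist $\omega>0$, $a\ge0$, $K>0$, $N\in\mathbb N$ such that for all $x\in H$: $\langle b(x),x\rangle\le-\omega|x|^2+a$ and $|b(x)|+\|b'(x)\|\le K(1+|x|^{2N})$. Let $\nu$ be the invariant probability measure of the transition semigroup of $dX(t)=b(X(t))\,dt+dW(t)$. Let $(e_1,\dots,e_d)$ be an orthonormal basis of $H$, and for $z\in H$ let $v_z$ be the function in $L^1(H,\nu)$ with $\int_H\langle D\varphi,z\rangle d\nu=\int_Hv_z\varphi\,d\nu$ for all $\varphi\in C^1_b(H)$. Fix $p>1$ and $q=\frac p{p-1}$, and let $D^*$ be the adjoint of the gradient as defined below. Let $F(x)=\sum_{h=1}^d f_h(x)e_h$ with $f_h\in C^1_b(H)$, $h=1,\dots,d$. Then $F$ belongs to the domain of $D^*$ and $$D^*(F)=-\operatorname{div}F+\sum_{h=1}^d v_{e_h}f_h.$$ Moreover, for every $\varphi\in C^2_b(H)$, $$-\tfrac12\,D^*(D\varphi)=\tfrac12\,\Delta\varphi-\tfrac12\sum_{h=1}^d v_{e_h}\,D_h\varphi,$$ where $D_h\varphi=\langle D\varphi,e_h\rangle$.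
   Context: $W$ is a standard $\mathbb R^d$-valued Brownian motion; $\nu$ is the (unique) invariant probability measure of $P_t\varphi(x)=\mathbb E[\varphi(X(t,x))]$. The functions $v_z$ exist and lie in $L^r(H,\nu)$ for all $r\in[1,\infty)$. Adjoint: $F\in L^q(H,\nu;H)$ belongs to the domain of $D^*$ iff there exists $g\in L^q(H,\nu)$ with $\int_H\langle D\varphi,F\rangle\,d\nu=\int_H\varphi\,g\,d\nu$ for all $\varphi\in C^1_b(H)$ (equivalently, iff $|\int_H\langle D\varphi,F\rangle d\nu|\le K_F\|\varphi\|_{L^p(H,\nu)}$ for all $\varphi\in C^1_b(H)$); then $D^*(F)=g$. This is the adjoint of the closure in $L^p(H,\nu)$ of the gradient $D:C^1_b(H)\to L^p(H,\nu;H)$. $C^k_b(H)$ denotes bounded functions with bounded continuous derivatives up to order $k$. *)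

(* Defs.v *)
From HB Require Import structures.
From mathcomp Require Import all_boot all_order all_algebra.
From mathcomp Require Import all_classical all_reals all_analysis.
Set Implicit Arguments. Unset Strict Implicit. Unset Printing Implicit Defensive.
Import Order.TTheory GRing.Theory Num.Theory.
Import numFieldNormedType.Exports.
Local Open Scope classical_set_scope.
Local Open Scope ring_scope.

Section defs.
Variables (R : realType) (d : nat).
Notation H := 'rV[R]_d.

Definition Hborel := g_sigma_algebraType (@open H).

Definition ev (i : 'I_d) : H := delta_mx 0 i.
Definition dotH (x y : H) : R := \sum_(i < d) x 0 i * y 0 i.
Definition normH (x : H) : R := Num.sqrt (dotH x x).
Definition gradH (f : H -> R) (x : H) : H := \row_i ('D_(ev i) f x).
Definition lapH (f : H -> R) (x : H) : R := \sum_(i < d) 'D_(ev i) ('D_(ev i) f) x.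
Definition divH (F : H -> H) (x : H) : R :=
  \sum_(i < d) 'D_(ev i) (fun y => F y 0 i) x.
Definition opnormH (L : H -> H) : R := sup [set normH (L h) | h in [set h | normH h <= 1]].
Definition C1H (f : H -> H) :=
  (forall x, differentiable f x) /\ forall i, continuous ('D_(ev i) f).
Definition boundedH (f : H -> R) := exists M : R, forall x, `|f x| <= M.
Definition Cb1 (f : H -> R) :=
  [/\ boundedH f, (forall x, differentiable f x),
      (forall i, continuous ('D_(ev i) f)) & (forall i, boundedH ('D_(ev i) f))].
Definition Cb2 (f : H -> R) := Cb1 f /\ forall i, Cb1 ('D_(ev i) f).
Definition orthonormalH (e : 'I_d -> H) :=
  forall h k, dotH (e h) (e k) = (h == k)%:R.

Definition brownian {dO : measure_display} {O : measurableType dO}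
  (P : probability O R) (W : R -> O -> H) :=
  [/\ (forall w, W 0 w = 0),
      (forall w, {within [set t | 0 <= t], continuous (fun t => W t w)}),
      (forall t j, measurable_fun setT (fun w => W t w 0 j)) &
      (forall (n : nat) (t : nat -> R), 0 <= t 0%N -> (forall k, t k < t k.+1) ->
        forall B : 'I_n -> 'I_d -> set R, (forall k j, measurable (B k j)) ->
        P [set w | forall (k : 'I_n) (j : 'I_d), B k j (W (t k.+1) w 0 j - W (t k) w 0 j)]
        = (\prod_(k < n) \prod_(j < d)
             normal_prob 0 (Num.sqrt (t k.+1 - t k)) (B k j))%E)].

Definition sde_solution {O : Type} (b : H -> H) (W : R -> O -> H)
  (X : R -> H -> O -> H) :=
  forall x w, {within [set t | 0 <= t], continuous (fun t => X t x w)} /\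
    forall t, 0 <= t -> X t x w =
      x + \row_j (Rintegral lebesgue_measure `[0, t] (fun s => b (X s x w) 0 j))
        + W t w.

Definition Pt {dO : measure_display} {O : measurableType dO}
  (P : probability O R) (X : R -> H -> O -> H) (t : R) (phi : H -> R) (x : H) : R :=
  fine (\int[P]_w (phi (X t x w))%:E).

Definition invariant_measure {dO : measure_display} {O : measurableType dO}
  (P : probability O R) (X : R -> H -> O -> H) (nu : probability Hborel R) :=
  forall t, 0 <= t -> forall phi : H -> R, continuous phi -> boundedH phi ->
    (\int[nu]_x (Pt P X t phi x)%:E = \int[nu]_x (phi x)%:E)%E.

Definition inLq (nu : probability Hborel R) (q : R) (f : H -> R) :=
  measurable_fun [set: Hborel] f /\ (\int[nu]_x (`|f x| `^ q)%:E < +oo)%E.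

Definition inLqH (nu : probability Hborel R) (q : R) (F : H -> H) :=
  (forall j, measurable_fun [set: Hborel] (fun x => F x 0 j)) /\
  (\int[nu]_x (normH (F x) `^ q)%:E < +oo)%E.

(* F is in the domain of D^* (in L^q) and D^*(F) = g *)
Definition Dstar_is (nu : probability Hborel R) (q : R) (F : H -> H) (g : H -> R) :=
  [/\ inLqH nu q F, inLq nu q g &
     forall phi, Cb1 phi ->
       (\int[nu]_x (dotH (gradH phi x) (F x))%:E = \int[nu]_x (phi x * g x)%:E)%E].
End defs.

(* Main.v *)
Require Import Defs.
From HB Require Import structures.
From mathcomp Require Import all_boot all_order all_algebra.
From mathcomp Require Import all_classical all_reals all_analysis.
From mathcomp Require Import measurable_realfun.
Import Order.TTheory GRing.Theory Num.Theory.
Import numFieldNormedType.Exports.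
Local Open Scope classical_set_scope.
Local Open Scope ring_scope.
From mathcomp Require Import lra.
Lemma cont_meas {R : realType} {d : nat} (f : 'rV[R]_d -> R) :
  continuous f -> measurable_fun [set: Hborel R d] f.
Proof.
move/continuousP=> cf; apply: (measurability _ (RGenOpens.measurableE R)).
move=> _ [_ [a [b ->] <-]]; rewrite setTI; apply: sub_sigma_algebra.
exact/cf/interval_open.
Qed.

Lemma Cb1_cont {R : realType} {d : nat} {f : 'rV[R]_d -> R} : Cb1 f -> continuous f.
Proof. by case=> _ df _ _ x; apply: differentiable_continuous. Qed.

Lemma deriveDx {R : realType} {d : nat} (f g : 'rV[R]_d -> R) x v :
  differentiable f x -> differentiable g x ->
  'D_v (fun y => f y + g y) x = 'D_v f x + 'D_v g x.
Proof. by move=> df dg; rewrite (deriveD (diff_derivable (v:=v) df) (diff_derivable (v:=v) dg)). Qed.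

Lemma deriveMx {R : realType} {d : nat} (f g : 'rV[R]_d -> R) x v :
  differentiable f x -> differentiable g x ->
  'D_v (fun y => f y * g y) x = f x * 'D_v g x + g x * 'D_v f x.
Proof. by move=> df dg; rewrite (deriveM (diff_derivable (v:=v) df) (diff_derivable (v:=v) dg)). Qed.

Lemma contD {R : realType} {d : nat} (f g : 'rV[R]_d -> R) :
  continuous f -> continuous g -> continuous (fun x => f x + g x).
Proof. move=> cf cg x; exact: (continuousD (cf x) (cg x)). Qed.

Lemma contM {R : realType} {d : nat} (f g : 'rV[R]_d -> R) :
  continuous f -> continuous g -> continuous (fun x => f x * g x).
Proof. move=> cf cg x; exact: (continuousM (cf x) (cg x)). Qed.

Lemma bH_mul {R : realType} {d : nat} {f g : 'rV[R]_d -> R} :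
  boundedH f -> boundedH g -> boundedH (fun x => f x * g x).
Proof.
move=> [M hM] [N hN]; exists (M * N) => x; rewrite normrM.
by apply: ler_pM => //.
Qed.

Lemma bH_add {R : realType} {d : nat} {f g : 'rV[R]_d -> R} :
  boundedH f -> boundedH g -> boundedH (fun x => f x + g x).
Proof.
move=> [M hM] [N hN]; exists (M + N) => x.
by rewrite (le_trans (ler_normD _ _))// lerD.
Qed.

Lemma Cb1_mul {R : realType} {d : nat} {f g : 'rV[R]_d -> R} :
  Cb1 f -> Cb1 g -> Cb1 (fun x => f x * g x).
Proof.
move=> [bf df cf bdf] [bg dg cg bdg].
have E i : 'D_(ev R i) (fun x => f x * g x) =
   fun x => f x * 'D_(ev R i) g x + g x * 'D_(ev R i) f x.
  by apply/funext=> x; exact: deriveMx.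
split.
- exact: bH_mul.
- by move=> x; exact: differentiableM.
- move=> i; rewrite E.
  have cF : continuous f by apply: Cb1_cont.
  have cG : continuous g by apply: Cb1_cont.
  by apply: contD; apply: contM.
- by move=> i; rewrite E; apply: bH_add; apply: bH_mul.
Qed.

Lemma Cb1_add {R : realType} {d : nat} {f g : 'rV[R]_d -> R} :
  Cb1 f -> Cb1 g -> Cb1 (fun x => f x + g x).
Proof.
move=> [bf df cf bdf] [bg dg cg bdg].
have E i : 'D_(ev R i) (fun x => f x + g x) =
   fun x => 'D_(ev R i) f x + 'D_(ev R i) g x.
  by apply/funext=> x; exact: deriveDx.
split.
- exact: bH_add.
- by move=> x; exact: differentiableD.
- by move=> i; rewrite E; apply: contD.
- by move=> i; rewrite E; apply: bH_add.
Qed.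

Lemma Cb1_cst {R : realType} {d : nat} (c : R) : Cb1 (fun _ : 'rV[R]_d => c).
Proof.
have E i : 'D_(ev R i) (fun _ : 'rV[R]_d => c) = fun _ => 0.
  by apply/funext=> x; exact: derive_cst.
split.
- by exists `|c|.
- by move=> x; exact: differentiable_cst.
- by move=> i; rewrite E; exact: cst_continuous.
- by move=> i; rewrite E; exists 0 => x; rewrite normr0.
Qed.

Lemma Cb1_sum {R : realType} {d n : nat} {F : 'I_n -> 'rV[R]_d -> R} :
  (forall j, Cb1 (F j)) -> Cb1 (fun x => \sum_(j < n) F j x).
Proof.
move=> hF; rewrite /index_enum; elim: (Finite.enum _) => [|j s IH].
  by under eq_fun do rewrite big_nil; exact: Cb1_cst.
under eq_fun do rewrite big_cons; exact: Cb1_add.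
Qed.

Lemma sum_delta {R : realType} {d : nat} (F : 'I_d -> R) (i : 'I_d) :
  \sum_(j < d) F j * (i == j)%:R = F i.
Proof.
rewrite (bigD1 i) //= eqxx mulr1 big1 ?addr0 // => j ji.
by rewrite eq_sym (negbTE ji) mulr0.
Qed.

Lemma basis_compl {R : realType} {d : nat} (e : 'I_d -> 'rV[R]_d) :
  orthonormalH e -> forall i j, \sum_(h < d) e h 0 i * e h 0 j = (i == j)%:R.
Proof.
move=> He i j.
pose E : 'M[R]_d := \matrix_(h, k) e h 0 k.
have EE : E *m E^T = 1%:M.
  apply/matrixP => h k; rewrite !mxE -He /dotH.
  by apply: eq_bigr => l _; rewrite !mxE.
have := mulmx1C EE => /matrixP /(_ i j); rewrite !mxE => <-.
by apply: eq_bigr => h _; rewrite !mxE.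
Qed.

Lemma parseval {R : realType} {d : nat} (e : 'I_d -> 'rV[R]_d) (a c : 'rV[R]_d) :
  orthonormalH e -> dotH a c = \sum_(h < d) dotH a (e h) * dotH c (e h).
Proof.
move=> He; rewrite /dotH.
transitivity (\sum_(i < d) \sum_(j < d) a 0 i * c 0 j * (i == j)%:R).
  by apply: eq_bigr => i _; rewrite sum_delta.
transitivity (\sum_(i < d) \sum_(j < d) \sum_(h < d)
   a 0 i * c 0 j * (e h 0 i * e h 0 j)).
  apply: eq_bigr => i _; apply: eq_bigr => j _.
  by rewrite -mulr_sumr basis_compl.
transitivity (\sum_(h < d) \sum_(i < d) \sum_(j < d)
   a 0 i * c 0 j * (e h 0 i * e h 0 j)).
  rewrite [RHS]exchange_big /=; apply: eq_bigr => i _; exact: exchange_big.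
apply: eq_bigr => h _; rewrite big_distrl /=; apply: eq_bigr => i _.
rewrite big_distrr /=; apply: eq_bigr => j _.
by rewrite mulrACA.
Qed.

Lemma bH_bounded {R : realType} {d : nat} (f : 'rV[R]_d -> R) :
  boundedH f -> [bounded f x | x in [set: 'rV[R]_d]].
Proof.
move=> [M hM]; rewrite /bounded_near; exists M; split; first exact: num_real.
by move=> N hN x _; exact: le_trans (hM x) (ltW hN).
Qed.

Lemma intg_bdd {R : realType} {d : nat} (nu : probability (Hborel R d) R)
  (f : 'rV[R]_d -> R) :
  measurable_fun [set: Hborel R d] f -> boundedH f ->
  nu.-integrable [set: Hborel R d] (EFin \o f).
Proof.
move=> mf bf; apply: measurable_bounded_integrable => //.
  exact: (le_lt_trans (probability_le1 _ measurableT) (ltry _)).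
exact: bH_bounded.
Qed.

Lemma intg_L1b {R : realType} {d : nat} (nu : probability (Hborel R d) R)
  (v f : 'rV[R]_d -> R) :
  inLq nu 1 v -> measurable_fun [set: Hborel R d] f -> boundedH f ->
  nu.-integrable [set: Hborel R d] (EFin \o (fun x => v x * f x)).
Proof.
move=> [mv iv] mf bf.
have iv' : nu.-integrable [set: Hborel R d] (EFin \o v).
  apply/integrableP; split; first exact/measurable_EFinP.
  apply: le_lt_trans iv; apply: ge0_le_integral => //.
  all: try (by apply/measurable_EFinP; apply: measurableT_comp).
  all: try (by apply/measurable_EFinP; apply: measurableT_comp => //; apply: measurableT_comp).
  - apply/measurable_EFinP; apply: (measurableT_comp (measurable_powR _)).
    exact: measurableT_comp.
  - by move=> x _ /=; rewrite powRr1.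
exact: (integrableMl measurableT iv' mf (bH_bounded f bf)).
Qed.

Lemma int_sumE {R : realType} {d n : nat} (nu : probability (Hborel R d) R)
  (F : 'I_n -> 'rV[R]_d -> R) :
  (forall h, nu.-integrable [set: Hborel R d] (EFin \o F h)) ->
  (\int[nu]_x (\sum_(h < n) F h x)%:E =
   \sum_(h < n) \int[nu]_x (F h x)%:E)%E.
Proof.
move=> iF; under eq_integral do rewrite -sumEFin.
by rewrite (integral_sum measurableT (f:=fun h (x : Hborel R d) => (F h x)%:E)).
Qed.

Lemma key {R : realType} {d n : nat} (nu : probability (Hborel R d) R)
  (A B C : 'I_n -> 'rV[R]_d -> R) :
  (forall h, nu.-integrable [set: Hborel R d] (EFin \o A h)) ->
  (forall h, nu.-integrable [set: Hborel R d] (EFin \o B h)) ->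
  (forall h, nu.-integrable [set: Hborel R d] (EFin \o C h)) ->
  (forall h, \int[nu]_x (C h x + A h x)%:E = \int[nu]_x (B h x)%:E)%E ->
  (\int[nu]_x (\sum_(h < n) A h x)%:E =
   \int[nu]_x (\sum_(h < n) (B h x - C h x))%:E)%E.
Proof.
move=> iA iB iC hE.
have iBC h : nu.-integrable [set: Hborel R d] (EFin \o (fun x => B h x - C h x)).
  exact: (integrableB measurableT (iB h) (iC h)).
rewrite int_sumE // int_sumE //; apply: eq_bigr => h _.
symmetry; under eq_integral do rewrite EFinB.
rewrite (integralB_EFin measurableT (iB h) (iC h)).
rewrite -hE.
have -> : (\int[nu]_x (C h x + A h x)%:E =
   \int[nu]_x (C h x)%:E + \int[nu]_x (A h x)%:E)%E.
  exact: (integralD_EFin measurableT (iC h) (iA h)).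
have fC : (\int[nu]_x (C h x)%:E)%E \is a fin_num by apply: (integrable_fin_num measurableT (iC h)).
by rewrite [X in (X - _)%E]addeC addeK.
Qed.

Lemma powR_addle {R : realType} (a b q : R) : 0 <= q ->
  `|a + b| `^ q <= 2 `^ q * (`|a| `^ q + `|b| `^ q).
Proof.
move=> q0.
have mono x y : 0 <= x -> x <= y -> x `^ q <= y `^ q.
  move=> x0 xy; apply: (ge0_ler_powR q0) => //; rewrite nnegrE //.
  exact: le_trans xy.
wlog ab : a b / `|a| <= `|b|.
  move=> W; have [h|h] := leP `|a| `|b|; first exact: W.
  by rewrite addrC [X in _ * X]addrC; apply: W; apply: ltW.
have h1 : `|a + b| <= 2 * `|b|.
  by rewrite (le_trans (ler_normD _ _))// mulr2n mulrDl mul1r lerD2r.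
apply: le_trans (mono _ _ (normr_ge0 _) h1) _.
rewrite powRM // ler_pM2l ?powR_gt0 //.
by rewrite lerDr powR_ge0.
Qed.

Lemma Lq_intg {R : realType} {d : nat} {nu : probability (Hborel R d) R} {q : R} {f : 'rV[R]_d -> R} :
  inLq nu q f ->
  nu.-integrable [set: Hborel R d] (EFin \o (fun x => `|f x| `^ q)).
Proof.
move=> [mf fi]; apply/integrableP; split.
  apply/measurable_EFinP; apply: (measurableT_comp (measurable_powR _)).
  exact: measurableT_comp.
apply: le_lt_trans fi; rewrite le_eqVlt; apply/orP; left; apply/eqP.
by apply: eq_integral => x _ /=; rewrite ger0_norm // powR_ge0.
Qed.

Lemma Lq_of_intg {R : realType} {d : nat} (nu : probability (Hborel R d) R) (q : R) (f : 'rV[R]_d -> R) :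
  measurable_fun [set: Hborel R d] f ->
  nu.-integrable [set: Hborel R d] (EFin \o (fun x => `|f x| `^ q)) ->
  inLq nu q f.
Proof. by move=> mf fi; split => //; exact: (integrable_lty measurableT fi). Qed.

Lemma Lq_bdd {R : realType} {d : nat} (nu : probability (Hborel R d) R) (q : R) (f : 'rV[R]_d -> R) :
  0 <= q -> measurable_fun [set: Hborel R d] f -> boundedH f -> inLq nu q f.
Proof.
move=> q0 mf [M hM]; apply: Lq_of_intg => //; apply: intg_bdd.
  apply: (measurableT_comp (measurable_powR _)); exact: measurableT_comp.
exists (M `^ q) => x; rewrite ger0_norm ?powR_ge0 //.
apply: (ge0_ler_powR q0) => //; rewrite nnegrE //.
exact: le_trans (hM x).
Qed.

Lemma Lq_add {R : realType} {d : nat} (nu : probability (Hborel R d) R) (q : R) (f g : 'rV[R]_d -> R) :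
  0 <= q -> inLq nu q f -> inLq nu q g -> inLq nu q (fun x => f x + g x).
Proof.
move=> q0 hf hg; have mf := hf.1; have mg := hg.1.
have mfg : measurable_fun [set: Hborel R d] (fun x => f x + g x).
  exact: measurable_funD.
apply: Lq_of_intg => //.
have i2 := integrableZl measurableT (2 `^ q)
  (integrableD measurableT (Lq_intg hf) (Lq_intg hg)).
apply: (le_integrable measurableT _ _ i2).
  apply/measurable_EFinP; apply: (measurableT_comp (measurable_powR _)).
  exact: measurableT_comp.
move=> x _ /=; rewrite lee_fin.
rewrite [X in X <= _]ger0_norm ?powR_ge0 //.
rewrite [X in _ <= X]ger0_norm ?mulr_ge0 ?addr_ge0 ?powR_ge0 //.
exact: powR_addle q0.
Qed.

Lemma Lq_mulb {R : realType} {d : nat} (nu : probability (Hborel R d) R) (q : R) (f h : 'rV[R]_d -> R) :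
  0 <= q -> inLq nu q f -> measurable_fun [set: Hborel R d] h -> boundedH h ->
  inLq nu q (fun x => f x * h x).
Proof.
move=> q0 hf mh [M hM]; have mf := hf.1.
have mfh : measurable_fun [set: Hborel R d] (fun x => f x * h x).
  exact: measurable_funM.
apply: Lq_of_intg => //.
have i2 := integrableZl measurableT (M `^ q) (Lq_intg hf).
apply: (le_integrable measurableT _ _ i2).
  apply/measurable_EFinP; apply: (measurableT_comp (measurable_powR _)).
  exact: measurableT_comp.
move=> x _ /=; rewrite lee_fin.
rewrite [X in X <= _]ger0_norm ?powR_ge0 //.
rewrite [X in _ <= X]ger0_norm ?mulr_ge0 ?powR_ge0 //.
rewrite normrM powRM // mulrC ler_wpM2r ?powR_ge0 //.
apply: (ge0_ler_powR q0) => //; rewrite nnegrE //.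
exact: le_trans (hM x).
Qed.

Lemma Lq_sum {R : realType} {d n : nat} (nu : probability (Hborel R d) R) q
  (F : 'I_n -> 'rV[R]_d -> R) :
  0 <= q -> (forall h, inLq nu q (F h)) -> inLq nu q (fun x => \sum_(h < n) F h x).
Proof.
move=> q0 hF; rewrite /index_enum; elim: (Finite.enum _) => [|j s IH].
  under eq_fun do rewrite big_nil.
  apply: Lq_bdd => //.
  by exists 0 => x; rewrite normr0.
under eq_fun do rewrite big_cons; exact: Lq_add.
Qed.

Lemma deriveSumx {R : realType} {d n : nat} (F : 'I_n -> 'rV[R]_d -> R) x v :
  (forall j, differentiable (F j) x) ->
  'D_v (fun y => \sum_(j < n) F j y) x = \sum_(j < n) 'D_v (F j) x.
Proof.
move=> dF; have -> : (fun y => \sum_(j < n) F j y) = \sum_(j < n) F j.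
  by rewrite fct_sumE.
by apply: derive_sum => j; exact: diff_derivable.
Qed.

Lemma diff_sumx {R : realType} {d n : nat} (F : 'I_n -> 'rV[R]_d -> R) x :
  (forall j, differentiable (F j) x) ->
  differentiable (fun y => \sum_(j < n) F j y) x.
Proof.
move=> dF; have -> : (fun y => \sum_(j < n) F j y) = \sum_(j < n) F j.
  by rewrite fct_sumE.
exact: differentiable_sum.
Qed.

Lemma deriveMcx {R : realType} {d : nat} (f : 'rV[R]_d -> R) (c : R) x v :
  differentiable f x -> 'D_v (fun y => f y * c) x = 'D_v f x * c.
Proof.
move=> df; rewrite (deriveMx f (fun _ => c) x v df (differentiable_cst c x)).
by rewrite (derive_cst c) mulr0 add0r mulrC.
Qed.

Lemma dotH_sumr {R : realType} {d n : nat} (a : 'rV[R]_d) (c : 'I_n -> R)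
  (w : 'I_n -> 'rV[R]_d) :
  dotH a (\sum_(h < n) c h *: w h) = \sum_(h < n) c h * dotH a (w h).
Proof.
rewrite /dotH.
transitivity (\sum_(i < d) \sum_(h < n) c h * (a 0 i * w h 0 i)).
  apply: eq_bigr => i _; rewrite summxE big_distrr /=; apply: eq_bigr => h _.
  by rewrite mxE mulrCA.
by rewrite exchange_big /=; apply: eq_bigr => h _; rewrite big_distrr.
Qed.

Lemma gradH_mul {R : realType} {d : nat} (f g : 'rV[R]_d -> R) x :
  differentiable f x -> differentiable g x ->
  gradH (fun y => f y * g y) x = f x *: gradH g x + g x *: gradH f x.
Proof.
move=> df dg; apply/matrixP => i j; rewrite !mxE.
exact: deriveMx.
Qed.

Lemma dotH_addl {R : realType} {d : nat} (u w z : 'rV[R]_d) :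
  dotH (u + w) z = dotH u z + dotH w z.
Proof. by rewrite /dotH -big_split /=; apply: eq_bigr => i _; rewrite mxE mulrDl. Qed.

Lemma dotH_scalel {R : realType} {d : nat} (k : R) (u z : 'rV[R]_d) :
  dotH (k *: u) z = k * dotH u z.
Proof. by rewrite /dotH big_distrr; apply: eq_bigr => i _; rewrite mxE -mulrA. Qed.

Lemma divH_sum {R : realType} {d : nat} (f : 'I_d -> 'rV[R]_d -> R)
  (e : 'I_d -> 'rV[R]_d) x :
  (forall h, differentiable (f h) x) ->
  divH (fun y => \sum_(h < d) f h y *: e h) x =
  \sum_(h < d) dotH (gradH (f h) x) (e h).
Proof.
move=> df; rewrite /divH /dotH.
transitivity (\sum_(i < d) \sum_(h < d) 'D_(ev R i) (f h) x * e h 0 i).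
  apply: eq_bigr => i _.
  have -> : (fun y => (\sum_(h < d) f h y *: e h) 0 i) =
            (fun y => \sum_(h < d) f h y * e h 0 i).
    by apply/funext => y; rewrite summxE; apply: eq_bigr => h _; rewrite mxE.
  rewrite deriveSumx; last by move=> h; apply: differentiableM.
  by apply: eq_bigr => h _; rewrite deriveMcx.
by rewrite exchange_big /=; apply: eq_bigr => h _; apply: eq_bigr => i _; rewrite mxE.
Qed.

Lemma uh_eq {R : realType} {d : nat} (phi : 'rV[R]_d -> R) (w : 'rV[R]_d) :
  (fun y => dotH (gradH phi y) w) = (fun y => \sum_(j < d) 'D_(ev R j) phi y * w 0 j).
Proof. by apply/funext => y; apply: eq_bigr => j _; rewrite mxE. Qed.

Lemma lap_eq {R : realType} {d : nat} (phi : 'rV[R]_d -> R) (e : 'I_d -> 'rV[R]_d) x :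
  Cb2 phi -> orthonormalH e ->
  lapH phi x = \sum_(h < d) dotH (gradH (fun y => dotH (gradH phi y) (e h)) x) (e h).
Proof.
move=> [_ h2] He; rewrite /lapH.
have dD j : differentiable ('D_(ev R j) phi) x by case: (h2 j).
pose DD i j := 'D_(ev R i) ('D_(ev R j) phi) x.
transitivity (\sum_(i < d) \sum_(j < d) DD i j * (i == j)%:R).
  by apply: eq_bigr => i _; rewrite sum_delta.
transitivity (\sum_(i < d) \sum_(j < d) \sum_(h < d) DD i j * (e h 0 i * e h 0 j)).
  apply: eq_bigr => i _; apply: eq_bigr => j _.
  by rewrite -mulr_sumr basis_compl.
transitivity (\sum_(h < d) \sum_(i < d) \sum_(j < d) DD i j * (e h 0 i * e h 0 j)).
  rewrite [RHS]exchange_big /=; apply: eq_bigr => i _; exact: exchange_big.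
apply: eq_bigr => h _; rewrite /dotH; apply: eq_bigr => i _; rewrite mxE.
rewrite (uh_eq phi (e h)) deriveSumx; last by move=> j; apply: differentiableM.
rewrite big_distrl /=; apply: eq_bigr => j _.
rewrite deriveMcx // /DD.
by rewrite [e h 0 i * _]mulrC !mulrA.
Qed.

Lemma LqH_of {R : realType} {d : nat} (nu : probability (Hborel R d) R) (q : R)
  (F : 'rV[R]_d -> 'rV[R]_d) :
  0 <= q -> (forall j, Cb1 (fun x => F x 0 j)) -> inLqH nu q F.
Proof.
move=> q0 hF.
have cF j : continuous (fun x => F x 0 j) := Cb1_cont (hF j).
split; first by move=> j; apply: cont_meas.
have mN : measurable_fun [set: Hborel R d] (fun x => normH (F x)).
  apply: cont_meas => x; rewrite /normH /dotH.
  apply: (continuous_comp (f := fun y => \sum_(j < d) F y 0 j * F y 0 j)).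
    exact: (Cb1_cont (Cb1_sum (fun j => Cb1_mul (hF j) (hF j)))).
  exact: sqrt_continuous.
have bN : boundedH (fun x => normH (F x)).
  have /choice [M hM] : forall j, exists M, forall x, `|F x 0 j| <= M.
    by move=> j; case: (hF j).
  have M0 j : 0 <= M j by apply: le_trans (hM j 0).
  exists (Num.sqrt (\sum_(j < d) M j * M j)) => x.
  rewrite ger0_norm ?sqrtr_ge0 // ler_sqrt ?sumr_ge0 //; last first.
    by move=> j _; rewrite mulr_ge0.
  apply: ler_sum => j _.
  by rewrite (le_trans (ler_norm _)) // normrM ler_pM.
have [_ fi] := Lq_bdd nu q _ q0 mN bN.
apply: le_lt_trans fi; rewrite le_eqVlt; apply/orP; left; apply/eqP.
by apply: eq_integral => x _; rewrite ger0_norm // sqrtr_ge0.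
Qed.

Definition MB {R : realType} {d : nat} (f : 'rV[R]_d -> R) :=
  measurable_fun [set: Hborel R d] f /\ boundedH f.

Lemma MB_Cb1 {R : realType} {d : nat} {f : 'rV[R]_d -> R} : Cb1 f -> MB f.
Proof. by move=> hf; split; [exact: cont_meas (Cb1_cont hf)| case: hf]. Qed.

Lemma MB_D {R : realType} {d : nat} {f : 'rV[R]_d -> R} i :
  Cb1 f -> MB ('D_(ev R i) f).
Proof. by case=> _ _ cf bf; split; [exact: cont_meas | exact: bf]. Qed.

Lemma MB_cst {R : realType} {d : nat} (c : R) : MB (fun _ : 'rV[R]_d => c).
Proof. by split => //; exists `|c|. Qed.

Lemma MB_mul {R : realType} {d : nat} {f g : 'rV[R]_d -> R} :
  MB f -> MB g -> MB (fun x => f x * g x).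
Proof.
by move=> [mf bf] [mg bg]; split; [exact: measurable_funM | exact: bH_mul].
Qed.

Lemma MB_add {R : realType} {d : nat} {f g : 'rV[R]_d -> R} :
  MB f -> MB g -> MB (fun x => f x + g x).
Proof.
by move=> [mf bf] [mg bg]; split; [exact: measurable_funD | exact: bH_add].
Qed.

Lemma MB_opp {R : realType} {d : nat} {f : 'rV[R]_d -> R} :
  MB f -> MB (fun x => - f x).
Proof.
move=> hf; have -> : (fun x => - f x) = (fun x => f x * -1).
  by apply/funext => x; rewrite mulrN1.
exact: MB_mul hf (MB_cst _).
Qed.

Lemma MB_sum {R : realType} {d n : nat} {F : 'I_n -> 'rV[R]_d -> R} :
  (forall j, MB (F j)) -> MB (fun x => \sum_(j < n) F j x).
Proof.
move=> hF; rewrite /index_enum; elim: (Finite.enum _) => [|j s IH].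
  by under eq_fun do rewrite big_nil; exact: MB_cst.
under eq_fun do rewrite big_cons; exact: MB_add.
Qed.

Lemma MB_dot {R : realType} {d : nat} {f : 'rV[R]_d -> R} (w : 'rV[R]_d) :
  Cb1 f -> MB (fun x => dotH (gradH f x) w).
Proof.
move=> hf; rewrite uh_eq; apply: MB_sum => j.
exact: MB_mul (MB_D j hf) (MB_cst _).
Qed.

Theorem proposition3p7 (R : realType) (d : nat) (hd : (0 < d)%N)
  (b : 'rV[R]_d -> 'rV[R]_d) (Hb : C1H b)
  (om a K : R) (N : nat) (hom : 0 < om) (ha : 0 <= a) (hK : 0 < K)
  (Hdiss : forall x, dotH (b x) x <= - om * normH x ^+ 2 + a)
  (Hgrowth : forall x, normH (b x) + opnormH ('d b x) <= K * (1 + normH x ^+ (2 * N)))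
  (dO : measure_display) (O : measurableType dO) (P : probability O R)
  (W : R -> O -> 'rV[R]_d) (HW : brownian P W)
  (X : R -> 'rV[R]_d -> O -> 'rV[R]_d) (HX : sde_solution b W X)
  (nu : probability (Hborel R d) R) (Hnu : invariant_measure P X nu)
  (e : 'I_d -> 'rV[R]_d) (He : orthonormalH e)
  (v : 'rV[R]_d -> 'rV[R]_d -> R)
  (Hv_int : forall z r, 1 <= r -> inLq nu r (v z))
  (Hv : forall z phi, Cb1 phi ->
     (\int[nu]_x (dotH (gradH phi x) z)%:E = \int[nu]_x (v z x * phi x)%:E)%E)
  (p q : R) (hp : 1 < p) (hq : q = p / (p - 1))
  (f : 'I_d -> 'rV[R]_d -> R) (Hf : forall h, Cb1 (f h)) :
  (exists g : 'rV[R]_d -> R,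
     Dstar_is nu q (fun x => \sum_(h < d) f h x *: e h) g /\
     forall x, g x = - divH (fun y => \sum_(h < d) f h y *: e h) x
                      + \sum_(h < d) v (e h) x * f h x) /\
  (forall phi : 'rV[R]_d -> R, Cb2 phi ->
     exists g : 'rV[R]_d -> R,
       Dstar_is nu q (gradH phi) g /\
       forall x, - (1 / 2) * g x = 1 / 2 * lapH phi x
                 - 1 / 2 * \sum_(h < d) v (e h) x * dotH (gradH phi x) (e h)).
Proof.
have q0 : 0 <= q.
  by rewrite hq divr_ge0 // ?subr_ge0 ltW // (lt_trans ltr01 hp).
have q1 : 1 <= q.
  by rewrite hq ler_pdivlMr ?subr_gt0 // mul1r gerBl ler01.
have dC (g : 'rV[R]_d -> R) : Cb1 g -> forall x, differentiable g x by case.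
have vL1 z : inLq nu 1 (v z) by apply: Hv_int.
have vLq z : inLq nu q (v z) by apply: Hv_int.
split.
- pose F := fun x => \sum_(h < d) f h x *: e h.
  have divE x : divH F x = \sum_(h < d) dotH (gradH (f h) x) (e h).
    by apply: divH_sum => h; apply: dC.
  exists (fun x => - divH F x + \sum_(h < d) v (e h) x * f h x); split => //.
  split.
  + apply: LqH_of q0 _ => j.
    have -> : (fun x => F x 0 j) = (fun x => \sum_(h < d) f h x * e h 0 j).
      by apply/funext => x; rewrite /F summxE; apply: eq_bigr => h _; rewrite mxE.
    by apply: Cb1_sum => h; apply: Cb1_mul (Hf h) (Cb1_cst _).
  + apply: Lq_add => //.
    * have [mm bb] : MB (fun x => - divH F x).
        under eq_fun do rewrite divE.
        by apply: MB_opp; apply: MB_sum => h; apply: MB_dot.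
      exact: Lq_bdd.
    * apply: Lq_sum => // h; have [mm bb] := MB_Cb1 (Hf h).
      exact: Lq_mulb.
  + move=> psi hpsi.
    transitivity (\int[nu]_x (\sum_(h < d)
        f h x * dotH (gradH psi x) (e h))%:E)%E.
      by apply: eq_integral => x _; rewrite /F dotH_sumr.
    transitivity (\int[nu]_x (\sum_(h < d)
        (v (e h) x * (psi x * f h x) - psi x * dotH (gradH (f h) x) (e h)))%:E)%E.
      apply: (key nu (fun h x => f h x * dotH (gradH psi x) (e h))
                     (fun h x => v (e h) x * (psi x * f h x))
                     (fun h x => psi x * dotH (gradH (f h) x) (e h))).
      * move=> h; have [mm bb] := MB_mul (MB_Cb1 (Hf h)) (MB_dot (e h) hpsi).
        exact: intg_bdd.
      * move=> h; have [mm bb] := MB_Cb1 (Cb1_mul hpsi (Hf h)).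
        exact: intg_L1b.
      * move=> h; have [mm bb] := MB_mul (MB_Cb1 hpsi) (MB_dot (e h) (Hf h)).
        exact: intg_bdd.
      * move=> h; rewrite -(Hv (e h) _ (Cb1_mul hpsi (Hf h))).
        apply: eq_integral => x _.
        rewrite gradH_mul; [|exact: dC|exact: dC].
        by rewrite dotH_addl !dotH_scalel.
    apply: eq_integral => x _; congr (_%:E).
    rewrite sumrB divE mulrDr mulrN !big_distrr /= addrC.
    congr (_ + _); apply: eq_bigr => h _.
    by rewrite mulrCA.
- move=> phi hphi; have [h1 h2] := hphi.
  pose u h := fun y => dotH (gradH phi y) (e h).
  have Cu h : Cb1 (u h).
    rewrite /u uh_eq; apply: Cb1_sum => j; exact: Cb1_mul (h2 j) (Cb1_cst _).
  exists (fun x => - lapH phi x + \sum_(h < d) v (e h) x * u h x); split; last first.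
    by move=> x; rewrite /u; lra.
  split.
  + apply: LqH_of q0 _ => j.
    have -> : (fun x => gradH phi x 0 j) = 'D_(ev R j) phi.
      by apply/funext => x; rewrite mxE.
    exact: h2.
  + apply: Lq_add => //.
    * have [mm bb] : MB (fun x => - lapH phi x).
        rewrite /lapH; apply: MB_opp; apply: MB_sum => i; exact: MB_D i (h2 i).
      exact: Lq_bdd.
    * apply: Lq_sum => // h; have [mm bb] := MB_Cb1 (Cu h).
      exact: Lq_mulb.
  + move=> psi hpsi.
    transitivity (\int[nu]_x (\sum_(h < d)
        u h x * dotH (gradH psi x) (e h))%:E)%E.
      apply: eq_integral => x _; rewrite (parseval e _ _ He).
      by congr (_%:E); apply: eq_bigr => h _; rewrite mulrC.
    transitivity (\int[nu]_x (\sum_(h < d)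
        (v (e h) x * (psi x * u h x) - psi x * dotH (gradH (u h) x) (e h)))%:E)%E.
      apply: (key nu (fun h x => u h x * dotH (gradH psi x) (e h))
                     (fun h x => v (e h) x * (psi x * u h x))
                     (fun h x => psi x * dotH (gradH (u h) x) (e h))).
      * move=> h; have [mm bb] := MB_mul (MB_Cb1 (Cu h)) (MB_dot (e h) hpsi).
        exact: intg_bdd.
      * move=> h; have [mm bb] := MB_Cb1 (Cb1_mul hpsi (Cu h)).
        exact: intg_L1b.
      * move=> h; have [mm bb] := MB_mul (MB_Cb1 hpsi) (MB_dot (e h) (Cu h)).
        exact: intg_bdd.
      * move=> h; rewrite -(Hv (e h) _ (Cb1_mul hpsi (Cu h))).
        apply: eq_integral => x _.
        rewrite gradH_mul; [|exact: dC|exact: dC].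
        by rewrite dotH_addl !dotH_scalel.
    apply: eq_integral => x _; congr (_%:E).
    rewrite sumrB (lap_eq phi e x hphi He) mulrDr mulrN !big_distrr /= addrC.
    congr (_ + _); apply: eq_bigr => h _.
    by rewrite mulrCA.
Qed.
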